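(* Let $T$ and $A$ be closed Hermitian subspaces in $X^2$ and $S$ a self-adjoint subspace in $X^2$, with $D(T)=D(S)=:D\subset D(A)$ and $T=S+A$, and assume $\rho(T)\cap\rho(S)\neq\emptyset$. Let $Q:A(0)^\perp\to S(0)^\perp$ be the orthogonal projection (note $S(0)^\perp\subset A(0)^\perp$ under these hypotheses). (i) If $QA_s$ is $S_s$-compact, then $T$ is a compact perturbation of $S$. (ii) If $T$ is a compact perturbation of $S$ and $T_s$ is a bounded operator on $D$, then $QA_s$ is $S_s$-compact.
   Context: $X$ is a complex Hilbert space and $X^2=X\times X$ carries the inner product $\langle (x,f),(y,g)\rangle=\langle x,y\rangle+\langle f,g\rangle$. A subspace $T$ in $X^2$ means a linear subspace of $X^2$ (a linear relation); a linear operator in $X$ is identified with its graph. Notation: $D(T)=\{x:(x,f)\in T \text{ for some } f\}$, $T(x)=\{f:(x,f)\in T\}$, $T^{-1}=\{(f,x):(x,f)\in T\}$, $\lambda I$ is the graph of $x\mapsto \lambda x$. The adjoint is $T^*=\{(y,g)\in X^2:\langle g,x\rangle=\langle y,f\rangle \text{ for all }(x,f)\in T\}$; $T$ is Hermitian if $T\subset T^*$ and self-adjoint if $T=T^*$. For subspaces $S,A$ in $X^2$, $S+A=\{(x,f+g):(x,f)\in S,(x,g)\in A\}$. For a closed subspace $T$, set $T_\infty=\{(0,g)\in X^2:(0,g)\in T\}$ and $T_s=T\ominus T_\infty$ (orthogonal complement of $T_\infty$ in $T$), so $T=T_s\oplus T_\infty$; $T_s$ is the graph of a linear operator (the operator part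 of $T$) with $D(T_s)=D(T)$ and $R(T_s)\subset T(0)^\perp$. Resolvent set: $\rho(T)=\{\lambda\in\mathbb C:(\lambda I-T)^{-1}$ is a bounded linear operator defined on all of $X\}$. For linear operators $U,V$ in $X$ with $D(V)\subset D(U)$: $U$ is $V$-compact if $U|_{D(V)}$ is compact as a map from $(D(V),\|\cdot\|_V)$ into $X$, where $\|x\|_V=\|x\|+\|Vx\|$. Compact perturbation: for closed subspaces $T,S$ in $X^2$ with orthogonal projections $P_T,P_S$ of $X^2$ onto $T$, $S$, $T$ is a compact perturbation of $S$ if $P_T-P_S$ is a compact operator. *)

(* Defs.v *)
From Stdlib Require Import Reals.
Open Scope R_scope.
Set Implicit Arguments.

Definition Cx : Type := (R * R)%type.
Definition C0 : Cx := (0, 0).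
Definition C1 : Cx := (1, 0).
Definition Cadd (a b : Cx) : Cx := (fst a + fst b, snd a + snd b).
Definition Cmul (a b : Cx) : Cx :=
  (fst a * fst b - snd a * snd b, fst a * snd b + snd a * fst b).
Definition Cconj (a : Cx) : Cx := (fst a, - snd a).
Definition Cre (a : Cx) : R := fst a.

(* Inner product is linear in the first argument, conjugate-linear in the second. *)
Record CHilbert := {
  hcar :> Type;
  hzero : hcar;
  hadd : hcar -> hcar -> hcar;
  hopp : hcar -> hcar;
  hscal : Cx -> hcar -> hcar;
  hinner : hcar -> hcar -> Cx;
  hadd_assoc : forall x y z, hadd x (hadd y z) = hadd (hadd x y) z;
  hadd_comm : forall x y, hadd x y = hadd y x;
  hadd_0 : forall x, hadd x hzero = x;
  hadd_opp : forall x, hadd x (hopp x) = hzero;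
  hscal_assoc : forall a b x, hscal a (hscal b x) = hscal (Cmul a b) x;
  hscal_1 : forall x, hscal C1 x = x;
  hscal_addv : forall a x y, hscal a (hadd x y) = hadd (hscal a x) (hscal a y);
  hscal_adds : forall a b x, hscal (Cadd a b) x = hadd (hscal a x) (hscal b x);
  hinner_addl : forall x y z, hinner (hadd x y) z = Cadd (hinner x z) (hinner y z);
  hinner_scall : forall a x y, hinner (hscal a x) y = Cmul a (hinner x y);
  hinner_conj : forall x y, hinner y x = Cconj (hinner x y);
  hinner_pos : forall x, 0 <= Cre (hinner x x);
  hinner_def : forall x, hinner x x = C0 -> x = hzero;
  hcomplete : forall u : nat -> hcar,
    (forall eps, 0 < eps -> exists N, forall m n, (N <= m)%nat -> (N <= n)%nat ->
        sqrt (Cre (hinner (hadd (u m) (hopp (u n))) (hadd (u m) (hopp (u n))))) < eps) ->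
    exists l, forall eps, 0 < eps -> exists N, forall n, (N <= n)%nat ->
        sqrt (Cre (hinner (hadd (u n) (hopp l)) (hadd (u n) (hopp l)))) < eps
}.

Section Hilb.
Variable X : CHilbert.

Definition vsub (x y : X) : X := hadd X x (hopp X y).
Definition norm (x : X) : R := sqrt (Cre (hinner X x x)).

Definition lim (u : nat -> X) (l : X) : Prop :=
  forall eps, 0 < eps -> exists N, forall n, (N <= n)%nat -> norm (vsub (u n) l) < eps.

Definition X2 : Type := (X * X)%type.
Definition add2 (z w : X2) : X2 := (hadd X (fst z) (fst w), hadd X (snd z) (snd w)).
Definition sub2 (z w : X2) : X2 := (vsub (fst z) (fst w), vsub (snd z) (snd w)).
Definition inner2 (z w : X2) : Cx :=
  Cadd (hinner X (fst z) (fst w)) (hinner X (snd z) (snd w)).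
Definition norm2 (z : X2) : R := sqrt (Cre (inner2 z z)).
Definition lim2 (u : nat -> X2) (l : X2) : Prop :=
  forall eps, 0 < eps -> exists N, forall n, (N <= n)%nat -> norm2 (sub2 (u n) l) < eps.

(* A subspace of X^2 (linear relation) is represented by its membership
   predicate: T x f  means  (x,f) \in T. *)
Definition Rel : Type := X -> X -> Prop.

Definition is_subspace (T : Rel) : Prop :=
  T (hzero X) (hzero X) /\
  (forall x f y g, T x f -> T y g -> T (hadd X x y) (hadd X f g)) /\
  (forall a x f, T x f -> T (hscal X a x) (hscal X a f)).

Definition closed_rel (T : Rel) : Prop :=
  forall (z : nat -> X2) (l : X2),
    (forall n, T (fst (z n)) (snd (z n))) -> lim2 z l -> T (fst l) (snd l).

Definition adj (T : Rel) : Rel :=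
  fun y g => forall x f, T x f -> hinner X g x = hinner X y f.

Definition hermitian (T : Rel) : Prop := forall x f, T x f -> adj T x f.
Definition selfadjoint (T : Rel) : Prop := forall y g, T y g <-> adj T y g.

Definition dom (T : Rel) (x : X) : Prop := exists f, T x f.
Definition img (T : Rel) (x : X) : X -> Prop := fun f => T x f.

Definition rel_sum (S A : Rel) : Rel :=
  fun x h => exists f g, S x f /\ A x g /\ h = hadd X f g.

Definition T_inf (T : Rel) : Rel := fun x g => x = hzero X /\ T (hzero X) g.
Definition op_part (T : Rel) : Rel :=
  fun x f => T x f /\
    (forall y g, T_inf T y g -> inner2 (x, f) (y, g) = C0).

Definition perp (V : X -> Prop) : X -> Prop :=
  fun y => forall v, V v -> hinner X y v = C0.

Definition is_proj_of (V : X -> Prop) (v p : X) : Prop :=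
  V p /\ forall w, V w -> hinner X (vsub v p) w = C0.

Definition is_proj2 (T : Rel) (P : X2 -> X2) : Prop :=
  forall z, T (fst (P z)) (snd (P z)) /\
    (forall x f, T x f -> inner2 (sub2 z (P z)) (x, f) = C0).

(* resolvent set: (lambda I - T)^{-1} is a bounded linear operator on all of X *)
Definition in_resolvent (lam : Cx) (T : Rel) : Prop :=
  (forall y, exists x f, T x f /\ vsub (hscal X lam x) f = y) /\
  (forall x f x' f', T x f -> T x' f' ->
     vsub (hscal X lam x) f = vsub (hscal X lam x') f' -> x = x') /\
  (exists M, forall x f, T x f -> norm x <= M * norm (vsub (hscal X lam x) f)).

Definition strict_incr (phi : nat -> nat) : Prop := forall n, (phi n < phi (Datatypes.S n))%nat.

Definition compact_op2 (K : X2 -> X2) : Prop :=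
  forall (z : nat -> X2) (M : R), (forall n, norm2 (z n) <= M) ->
    exists phi l, strict_incr phi /\ lim2 (fun n => K (z (phi n))) l.

Definition compact_perturbation (T S : Rel) : Prop :=
  forall PT PS, is_proj2 T PT -> is_proj2 S PS ->
    compact_op2 (fun z => sub2 (PT z) (PS z)).

(* U is V-compact (U, V operators given by their graphs, D(V) in D(U)):
   U restricted to D(V) is compact from (D(V), ||.||_V) into X *)
Definition rel_compact (U V : Rel) : Prop :=
  forall (x y u : nat -> X) (M : R),
    (forall n, V (x n) (y n)) -> (forall n, U (x n) (u n)) ->
    (forall n, norm (x n) + norm (y n) <= M) ->
    exists phi l, strict_incr phi /\ lim (fun n => u (phi n)) l.

Definition QAs (S A : Rel) : Rel :=
  fun x q => exists a, op_part A x a /\ is_proj_of (perp (img S (hzero X))) a q.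

Definition bounded_rel (T : Rel) : Prop :=
  exists M, forall x f, T x f -> norm f <= M * norm x.

End Hilb.

(* Main.v *)
Require Import Defs.
From Stdlib Require Import Reals Lra Lia Psatz ClassicalEpsilon Classical ZArith.
Open Scope R_scope.

Arguments vsub {X} x y.
Arguments norm {X} x.
Arguments lim {X} u l.

Definition Copp (a : Cx) : Cx := (- fst a, - snd a).

Lemma Cx_eq (a b : Cx) : fst a = fst b -> snd a = snd b -> a = b.
Proof. destruct a, b; simpl; intros -> ->; reflexivity. Qed.

Ltac cring := apply Cx_eq; unfold Cadd, Cmul, Cconj, Copp, C0, C1, Cre;
  cbn [fst snd]; (ring || field).

Section Basic.
Variable H : CHilbert.
Notation "x + y" := (hadd H x y).
Notation "- x" := (hopp H x).
Notation "<< x , y >>" := (hinner H x y).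

Lemma inner_0l (y : H) : << hzero H, y >> = C0.
Proof.
  assert (E : << hzero H + hzero H, y >> = << hzero H, y >>) by (rewrite hadd_0; reflexivity).
  rewrite hinner_addl in E.
  destruct (<< hzero H, y >>) as [a b] eqn:Q. unfold Cadd in E; simpl in E.
  injection E; intros; apply Cx_eq; simpl; lra.
Qed.

Lemma inner_oppl (x y : H) : << - x, y >> = Copp << x, y >>.
Proof.
  assert (E : << x + - x, y >> = C0) by (rewrite hadd_opp; apply inner_0l).
  rewrite hinner_addl in E.
  destruct (<< x, y >>) as [a b]; destruct (<< -x, y >>) as [c d].
  unfold Cadd, C0 in E; simpl in E. injection E; intros.
  apply Cx_eq; simpl; lra.
Qed.

Lemma inner_addr (x y z : H) : << x, y + z >> = Cadd << x, y >> << x, z >>.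
Proof.
  rewrite hinner_conj, hinner_addl, (hinner_conj H y x), (hinner_conj H z x).
  destruct (<< y, x >>), (<< z, x >>); cring.
Qed.

Lemma inner_scalr (a : Cx) (x y : H) : << x, hscal H a y >> = Cmul (Cconj a) << x, y >>.
Proof.
  rewrite hinner_conj, hinner_scall, (hinner_conj H y x).
  destruct (<< y, x >>), a; cring.
Qed.

Lemma inner_oppr (x y : H) : << x, - y >> = Copp << x, y >>.
Proof.
  rewrite hinner_conj, inner_oppl, (hinner_conj H y x).
  destruct (<< y, x >>); cring.
Qed.

Lemma inner_0r (y : H) : << y, hzero H >> = C0.
Proof. rewrite hinner_conj, inner_0l. cring. Qed.

Lemma hadd_0l (x : H) : hzero H + x = x.
Proof. rewrite hadd_comm; apply hadd_0. Qed.

Lemma vec_eq_of (u v : H) : << u + - v, u + - v >> = C0 -> u = v.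
Proof.
  intro E. apply hinner_def in E.
  rewrite <- (hadd_0 H u), <- (hadd_opp H v), (hadd_comm H v), hadd_assoc, E.
  apply hadd_0l.
Qed.

End Basic.

Ltac cexp := repeat (rewrite ?hinner_addl, ?inner_addr, ?hinner_scall, ?inner_scalr,
  ?inner_oppl, ?inner_oppr, ?inner_0l, ?inner_0r).

Ltac cexpH P := repeat (rewrite ?hinner_addl, ?inner_addr, ?hinner_scall, ?inner_scalr,
  ?inner_oppl, ?inner_oppr, ?inner_0l, ?inner_0r in P).

Ltac veq := apply vec_eq_of; unfold vsub; cexp; cring.

Ltac cunf := unfold Cadd, Cmul, Cconj, Copp, C0, C1, Cre in *; cbn [fst snd] in *.

Section Norms.
Variable H : CHilbert.
Notation "<< x , y >>" := (hinner H x y).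

Lemma im_self (x : H) : snd << x, x >> = 0.
Proof.
  pose proof (hinner_conj H x x) as E. destruct (<< x, x >>) as [a b].
  unfold Cconj in E; simpl in *. injection E; intros; lra.
Qed.

Lemma re_sym (x y : H) : Cre << y, x >> = Cre << x, y >>.
Proof. rewrite hinner_conj. destruct (<<x,y>>); reflexivity. Qed.

Lemma im_sym (x y : H) : snd << y, x >> = - snd << x, y >>.
Proof. rewrite hinner_conj. destruct (<<x,y>>); reflexivity. Qed.

Lemma re_pos (x : H) : 0 <= Cre << x, x >>.
Proof. apply hinner_pos. Qed.

Lemma norm_ge0 (x : H) : 0 <= norm x.
Proof. apply sqrt_pos. Qed.

Lemma norm_sq (x : H) : norm x * norm x = Cre << x, x >>.
Proof. apply sqrt_sqrt, re_pos. Qed.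

Lemma norm_eq0 (x : H) : norm x = 0 -> x = hzero H.
Proof.
  intro E. apply hinner_def. pose proof (norm_sq x) as Q. rewrite E in Q.
  apply Cx_eq. unfold Cre in Q. simpl. lra. simpl. apply im_self.
Qed.

Lemma norm_le_sq (x : H) (r : R) : 0 <= r -> Cre << x, x >> <= r * r -> norm x <= r.
Proof.
  intros Hr Hle. unfold norm. rewrite <- (sqrt_square r Hr). apply sqrt_le_1_alt. lra.
Qed.

Lemma norm_lt_sq (x : H) (r : R) : 0 <= r -> Cre << x, x >> < r * r -> norm x < r.
Proof.
  intros Hr Hle. unfold norm. rewrite <- (sqrt_square r Hr). apply sqrt_lt_1_alt.
  split; [apply re_pos|lra].
Qed.

Lemma CS (x y : H) : Cre << x, y >> <= norm x * norm y.
Proof.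
  set (A := Cre << x, x >>). set (B := Cre << x, y >>). set (C := Cre << y, y >>).
  assert (Q : forall t, 0 <= A + 2 * t * B + t * t * C).
  { intro t. pose proof (re_pos (hadd H x (hscal H (t,0) y))) as P.
    cexpH P. pose proof (re_sym x y). unfold A, B, C in *. cunf. nra. }
  assert (HA : 0 <= A) by apply re_pos. assert (HC : 0 <= C) by apply re_pos.
  assert (D : B * B <= A * C).
  { destruct (Req_dec C 0) as [C0'|C0'].
    - assert (B = 0).
      { destruct (Req_dec B 0) as [|NB]; auto. specialize (Q (- (A + 1) / (2 * B))).
        assert (E : 2 * (- (A + 1) / (2 * B)) * B = - (A + 1)) by (field; auto).
        rewrite C0', E in Q. lra. }
      nra.
    - specialize (Q (- B / C)).
      assert (E1 : 2 * (- B / C) * B = - 2 * (B * B) / C) by (field; auto).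
      assert (E2 : (- B / C) * (- B / C) * C = (B * B) / C) by (field; auto).
      rewrite E1, E2 in Q.
      assert (E3 : A + - 2 * (B * B) / C + B * B / C = (A * C - B * B) / C) by (field; auto).
      rewrite E3 in Q.
      destruct (Rle_dec (B * B) (A * C)) as [|NL]; auto.
      exfalso. assert (0 < (B * B - A * C) / C) by (apply Rdiv_lt_0_compat; lra).
      assert ((A * C - B * B) / C = - ((B * B - A * C) / C)) by (field; auto). lra. }
  pose proof (norm_sq x) as Nx; pose proof (norm_sq y) as Ny.
  pose proof (norm_ge0 x); pose proof (norm_ge0 y).
  assert (D2 : B * B <= (norm x * norm y) * (norm x * norm y)).
  { replace ((norm x * norm y) * (norm x * norm y)) with ((norm x * norm x) * (norm y * norm y)) by ring.
    rewrite Nx, Ny. exact D. }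
  destruct (Rle_dec B (norm x * norm y)) as [|NL]; auto.
  assert (0 <= norm x * norm y) by nra. nra.
Qed.

Lemma CS_abs (x y : H) : Rabs (Cre << x, y >>) <= norm x * norm y.
Proof.
  apply Rabs_le. split.
  - pose proof (CS (hopp H x) y) as P. rewrite inner_oppl in P.
    assert (norm (hopp H x) = norm x).
    { unfold norm. f_equal. cexp. cunf. ring. }
    rewrite H0 in P. cunf. lra.
  - apply CS.
Qed.

Lemma norm_triangle (x y : H) : norm (hadd H x y) <= norm x + norm y.
Proof.
  apply norm_le_sq. pose proof (norm_ge0 x); pose proof (norm_ge0 y); lra.
  pose proof (CS x y). pose proof (norm_sq x); pose proof (norm_sq y).
  pose proof (re_sym x y). cexp. cunf. nra.
Qed.

Lemma norm_opp (x : H) : norm (hopp H x) = norm x.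
Proof. unfold norm. f_equal. cexp. cunf. ring. Qed.

Lemma norm_0 : norm (hzero H) = 0.
Proof. unfold norm. rewrite inner_0l. unfold Cre, C0; simpl. apply sqrt_0. Qed.

Lemma norm_scal_real (r : R) (x : H) : norm (hscal H (r,0) x) = Rabs r * norm x.
Proof.
  unfold norm. rewrite <- sqrt_Rsqr_abs, <- sqrt_mult_alt.
  f_equal. cexp. cunf. unfold Rsqr. ring.
  apply Rle_0_sqr.
Qed.

Lemma norm_scal (a : Cx) (x : H) : norm (hscal H a x) = sqrt (fst a * fst a + snd a * snd a) * norm x.
Proof.
  unfold norm. rewrite <- sqrt_mult_alt.
  f_equal. cexp. cunf. pose proof (im_self x). ring_simplify. nra.
  nra.
Qed.

Lemma norm_sub_sym (x y : H) : norm (vsub x y) = norm (vsub y x).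
Proof. unfold norm, vsub. f_equal. cexp. cunf. ring. Qed.

Lemma norm_sub_triangle (x y z : H) : norm (vsub x z) <= norm (vsub x y) + norm (vsub y z).
Proof.
  replace (vsub x z) with (hadd H (vsub x y) (vsub y z)) by veq. apply norm_triangle.
Qed.

End Norms.


Lemma choice_nat {A : Type} (P : nat -> A -> Prop) :
  (forall n, exists x, P n x) -> exists f : nat -> A, forall n, P n (f n).
Proof.
  intro Hx. exists (fun n => proj1_sig (constructive_indefinite_description _ (Hx n))).
  intro n. exact (proj2_sig (constructive_indefinite_description _ (Hx n))).
Qed.

Lemma le_eps (x y : R) : (forall eps, 0 < eps -> x <= y + eps) -> x <= y.
Proof.
  intro Hx. destruct (Rle_dec x y) as [|NL]; auto.
  specialize (Hx ((x - y) / 2)). lra.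
Qed.

Lemma abs_le_inv (x b : R) : Rabs x <= b -> - b <= x <= b.
Proof. intro Hx. destruct (Rcase_abs x); [rewrite Rabs_left in Hx|rewrite Rabs_right in Hx]; lra. Qed.

Lemma small_0' (x : R) : (forall eps, 0 < eps -> Rabs x <= eps) -> x = 0.
Proof.
  intro Hx. assert (Rabs x <= 0) by (apply le_eps; intros; rewrite Rplus_0_l; auto).
  pose proof (Rabs_pos x). destruct (Rcase_abs x); [rewrite Rabs_left in *|rewrite Rabs_right in *]; lra.
Qed.

Lemma small_0 (x : R) : 0 <= x -> (forall eps, 0 < eps -> x <= eps) -> x = 0.
Proof. intros. assert (x <= 0) by (apply le_eps; intros; rewrite Rplus_0_l; auto). lra. Qed.

Lemma inv_small (eps : R) : 0 < eps -> exists N : nat, forall n, (N <= n)%nat -> / (INR n + 1) < eps.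
Proof.
  intro He. destruct (archimed (/ eps)) as [Ha _].
  assert (0 <= IZR (up (/ eps))). { pose proof (Rinv_0_lt_compat _ He). lra. }
  exists (Z.to_nat (up (/ eps))). intros n Hn.
  apply le_INR in Hn. rewrite INR_IZR_INZ, Z2Nat.id in Hn by (apply le_IZR; lra).
  assert (0 < INR n + 1) by (pose proof (pos_INR n); lra).
  rewrite <- (Rinv_inv eps). apply Rinv_lt_contravar.
  - apply Rmult_lt_0_compat; [apply Rinv_0_lt_compat|]; lra.
  - lra.
Qed.

Section Lims.
Variable H : CHilbert.
Notation "<< x , y >>" := (hinner H x y).

Definition cauchy (u : nat -> H) : Prop :=
  forall eps, 0 < eps -> exists N, forall m n, (N <= m)%nat -> (N <= n)%nat ->
    norm (vsub (u m) (u n)) < eps.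

Lemma cauchy_lim (u : nat -> H) : cauchy u -> exists l, lim u l.
Proof. intro C. apply (hcomplete H u C). Qed.

Lemma lim_cauchy (u : nat -> H) l : lim u l -> cauchy u.
Proof.
  intros L eps He. destruct (L (eps/2)) as [N HN]; [lra|]. exists N. intros m n Hm Hn.
  pose proof (norm_sub_triangle H (u m) l (u n)). rewrite (norm_sub_sym H l) in H0.
  pose proof (HN m Hm). pose proof (HN n Hn). lra.
Qed.

Lemma lim_re0 (u : nat -> H) l v : lim u l -> (forall n, Cre << u n, v >> = 0) -> Cre << l, v >> = 0.
Proof.
  intros L Z.
  assert (B : forall eps, 0 < eps -> Rabs (Cre << l, v >>) <= eps).
  { intros eps He. destruct (L (eps / (norm v + 1))) as [N HN].
    { apply Rdiv_lt_0_compat; [auto|pose proof (norm_ge0 H v); lra]. }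
    specialize (HN N (le_n N)). specialize (Z N).
    pose proof (CS_abs H (vsub l (u N)) v) as P. unfold vsub in P. rewrite hinner_addl, inner_oppl in P.
    rewrite norm_sub_sym in HN. unfold vsub in HN.
    cunf. rewrite Z, Ropp_0, Rplus_0_r in P.
    pose proof (norm_ge0 H v). pose proof (norm_ge0 H (hadd H l (hopp H (u N)))).
    assert (norm (hadd H l (hopp H (u N))) * norm v <= eps / (norm v + 1) * norm v) by
      (apply Rmult_le_compat_r; lra).
    assert (eps / (norm v + 1) * norm v <= eps).
    { unfold Rdiv. rewrite Rmult_assoc. rewrite <- (Rmult_1_r eps) at 2. apply Rmult_le_compat_l; [lra|].
      apply Rmult_le_reg_l with (norm v + 1); [lra|]. field_simplify; lra. }
    lra. }
  pose proof (small_0 _ (Rabs_pos _) B) as Z0. destruct (Rcase_abs (Cre << l, v >>)) as [Hc|Hc]; [rewrite Rabs_left in Z0|rewrite Rabs_right in Z0]; lra.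
Qed.

Lemma lim_inner0 (u : nat -> H) l v : lim u l -> (forall n, << u n, v >> = C0) -> << l, v >> = C0.
Proof.
  intros L Z. apply Cx_eq.
  - apply (lim_re0 u); auto. intro n; rewrite Z; reflexivity.
  - assert (Cre << l, hscal H (0,1) v >> = 0).
    { apply (lim_re0 u); auto. intro n. rewrite inner_scalr, Z. cunf. ring. }
    rewrite inner_scalr in H0. cunf. simpl. lra.
Qed.

Definition closed_set (V : H -> Prop) : Prop :=
  forall u l, (forall n, V (u n)) -> lim u l -> V l.
Definition subsp (V : H -> Prop) : Prop :=
  V (hzero H) /\ (forall x y, V x -> V y -> V (hadd H x y)) /\ (forall a x, V x -> V (hscal H a x)).

Lemma perp_closed (V : H -> Prop) : closed_set (perp H V).
Proof. intros u l Hu L w Hw. apply (lim_inner0 u); auto. intro n; apply Hu; auto. Qed.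

Lemma orth_of_re (y : H) (V : H -> Prop) : subsp V ->
  (forall w, V w -> Cre << y, w >> = 0) -> forall w, V w -> << y, w >> = C0.
Proof.
  intros [_ [_ Sc]] Hr w Hw. apply Cx_eq. apply Hr; auto.
  pose proof (Hr _ (Sc (0,1) w Hw)). rewrite inner_scalr in H0. cunf. simpl; lra.
Qed.

Lemma proj_exists (V : H -> Prop) : subsp V -> closed_set V ->
  forall v, exists p, V p /\ forall w, V w -> << vsub v p, w >> = C0.
Proof.
  intros SV CV v. destruct SV as [V0 [VA VS]].
  set (E := fun r => exists w, V w /\ r = - norm (vsub v w)).
  assert (EB : bound E). { exists 0. intros r [w [_ ->]]. pose proof (norm_ge0 H (vsub v w)); lra. }
  assert (EN : exists r, E r) by (exists (- norm (vsub v (hzero H))); exists (hzero H); auto).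
  destruct (completeness E EB EN) as [L [LU LL]].
  set (d := - L).
  assert (Dlow : forall w, V w -> d <= norm (vsub v w)).
  { intros w Hw. assert (- norm (vsub v w) <= L) by (apply LU; exists w; auto). unfold d; lra. }
  assert (Dapp : forall eps, 0 < eps -> exists w, V w /\ norm (vsub v w) < d + eps).
  { intros eps He. apply not_all_not_ex. intro NA.
    assert (L <= L - eps); [|lra]. apply LL. intros r [w [Hw ->]].
    specialize (NA w). apply not_and_or in NA. destruct NA as [NA|NA]; [contradiction|].
    apply Rnot_lt_le in NA. unfold d in NA. lra. }
  assert (d0 : 0 <= d).
  { assert (L <= 0); [|unfold d; lra]. apply LL. intros r [w [_ ->]]. pose proof (norm_ge0 H (vsub v w)); lra. }
  destruct (choice_nat (fun n w => V w /\ norm (vsub v w) < d + / (INR n + 1))) as [ws Hws].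
  { intro n. apply Dapp. apply Rinv_0_lt_compat. pose proof (pos_INR n); lra. }
  (* parallelogram estimate *)
  assert (Par : forall m n, Cre << vsub (ws m) (ws n), vsub (ws m) (ws n) >> <=
      2 * (d + / (INR m + 1)) * (d + / (INR m + 1)) + 2 * (d + / (INR n + 1)) * (d + / (INR n + 1)) - 4 * d * d).
  { intros m n. destruct (Hws m) as [Vm Nm]. destruct (Hws n) as [Vn Nn].
    set (mid := hscal H (/2, 0) (hadd H (ws m) (ws n))).
    assert (Vmid : V mid) by (apply VS, VA; auto).
    pose proof (Dlow _ Vmid) as Dm.
    assert (Eq : Cre << vsub (ws m) (ws n), vsub (ws m) (ws n) >> =
       2 * Cre << vsub v (ws m), vsub v (ws m) >> + 2 * Cre << vsub v (ws n), vsub v (ws n) >>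
       - 4 * Cre << vsub v mid, vsub v mid >>).
    { unfold mid, vsub. cexp. cunf. field. }
    rewrite Eq. rewrite <- !norm_sq.
    pose proof (norm_ge0 H (vsub v (ws m))). pose proof (norm_ge0 H (vsub v (ws n))).
    assert (0 < / (INR m + 1)) by (apply Rinv_0_lt_compat; pose proof (pos_INR m); lra).
    assert (0 < / (INR n + 1)) by (apply Rinv_0_lt_compat; pose proof (pos_INR n); lra).
    nra. }
  assert (Cws : cauchy ws).
  { intros eps He.
    destruct (inv_small (eps * eps / (8 * d + 8))) as [N HN].
    { apply Rdiv_lt_0_compat; nra. }
    exists N. intros m n Hm Hn. apply norm_lt_sq; [lra|].
    specialize (HN m Hm) as Am. specialize (HN n Hn) as An.
    pose proof (Par m n).
    assert (0 < / (INR m + 1)) by (apply Rinv_0_lt_compat; pose proof (pos_INR m); lra).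
    assert (0 < / (INR n + 1)) by (apply Rinv_0_lt_compat; pose proof (pos_INR n); lra).
    assert (/ (INR m + 1) <= 1).
    { rewrite <- Rinv_1. apply Rinv_le_contravar; [lra|]. pose proof (pos_INR m); lra. }
    assert (/ (INR n + 1) <= 1).
    { rewrite <- Rinv_1. apply Rinv_le_contravar; [lra|]. pose proof (pos_INR n); lra. }
    assert (EE : eps * eps / (8 * d + 8) * (8 * d + 8) = eps * eps) by (field; lra).
    nra. }
  destruct (cauchy_lim ws Cws) as [p Lp].
  exists p. split.
  { apply (CV ws p); auto. intro n; apply Hws. }
  assert (Vp : V p) by (apply (CV ws p); auto; intro n; apply Hws).
  assert (Np : norm (vsub v p) <= d).
  { apply le_eps. intros eps He.
    destruct (Lp (eps/2)) as [N1 HN1]; [lra|].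
    destruct (inv_small (eps/2)) as [N2 HN2]; [lra|].
    set (n := max N1 N2).
    specialize (HN1 n (Nat.le_max_l _ _)). specialize (HN2 n (Nat.le_max_r _ _)).
    pose proof (norm_sub_triangle H v (ws n) p). destruct (Hws n). lra. }
  apply orth_of_re; [repeat split; auto|].
  intros w Hw.
  set (c := Cre << vsub v p, w >>). set (W := Cre << w, w >>).
  assert (Q : forall t, 0 <= t * t * W - 2 * t * c).
  { intro t. assert (Vt : V (hadd H p (hscal H (t,0) w))) by (apply VA; auto).
    pose proof (Dlow _ Vt) as Dt.
    assert (norm (vsub v p) <= norm (vsub v (hadd H p (hscal H (t, 0) w)))) by lra.
    assert (Ex : Cre << vsub v (hadd H p (hscal H (t, 0) w)), vsub v (hadd H p (hscal H (t, 0) w)) >>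
      = Cre << vsub v p, vsub v p >> - 2 * t * c + t * t * W).
    { unfold c, W, vsub. cexp. pose proof (re_sym H (hadd H v (hopp H p)) w). unfold vsub in *. cexpH H1. cunf. nra. }
    rewrite <- !norm_sq in Ex. pose proof (norm_ge0 H (vsub v p)).
    pose proof (norm_ge0 H (vsub v (hadd H p (hscal H (t, 0) w)))). nra. }
  assert (W0 : 0 <= W) by apply re_pos.
  specialize (Q (c / (W + 2))).
  assert (Eq2 : c / (W + 2) * (c / (W + 2)) * W - 2 * (c / (W + 2)) * c = - c * c * (W + 4) / ((W + 2) * (W + 2))) by (field; lra).
  rewrite Eq2 in Q.
  assert (0 <= - c * c * (W + 4)).
  { apply Rmult_le_reg_r with (/ ((W + 2) * (W + 2))).
    apply Rinv_0_lt_compat; nra. rewrite Rmult_0_l. exact Q. }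
  nra.
Qed.

End Lims.


Section Prod.
Variable X : CHilbert.

Definition opp2 (z : X2 X) : X2 X := (hopp X (fst z), hopp X (snd z)).
Definition scal2 (a : Cx) (z : X2 X) : X2 X := (hscal X a (fst z), hscal X a (snd z)).
Definition zero2 : X2 X := (hzero X, hzero X).

Lemma pair_eq (z w : X2 X) : fst z = fst w -> snd z = snd w -> z = w.
Proof. destruct z, w; simpl; intros -> ->; auto. Qed.

Lemma norm2_fst (z : X2 X) : norm (fst z) <= norm2 z.
Proof.
  unfold norm, norm2. apply sqrt_le_1_alt. unfold inner2. pose proof (re_pos X (snd z)). cunf. lra.
Qed.
Lemma norm2_snd (z : X2 X) : norm (snd z) <= norm2 z.
Proof.
  unfold norm, norm2. apply sqrt_le_1_alt. unfold inner2. pose proof (re_pos X (fst z)). cunf. lra.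
Qed.
Lemma norm2_le (z : X2 X) : norm2 z <= norm (fst z) + norm (snd z).
Proof.
  unfold norm2. pose proof (norm_sq X (fst z)). pose proof (norm_sq X (snd z)).
  pose proof (norm_ge0 X (fst z)). pose proof (norm_ge0 X (snd z)).
  rewrite <- (sqrt_square (norm (fst z) + norm (snd z))) by lra.
  apply sqrt_le_1_alt. unfold inner2. cunf. nra.
Qed.

Lemma prod_complete : forall u : nat -> X2 X,
    (forall eps, 0 < eps -> exists N, forall m n, (N <= m)%nat -> (N <= n)%nat ->
        sqrt (Cre (inner2 (add2 (u m) (opp2 (u n))) (add2 (u m) (opp2 (u n))))) < eps) ->
    exists l, forall eps, 0 < eps -> exists N, forall n, (N <= n)%nat ->
        sqrt (Cre (inner2 (add2 (u n) (opp2 l)) (add2 (u n) (opp2 l)))) < eps.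
Proof.
  intros u C.
  destruct (cauchy_lim X (fun n => fst (u n))) as [l1 L1].
  { intros eps He. destruct (C eps He) as [N HN]. exists N. intros m n Hm Hn.
    eapply Rle_lt_trans; [|apply (HN m n Hm Hn)]. apply (norm2_fst (sub2 (u m) (u n))). }
  destruct (cauchy_lim X (fun n => snd (u n))) as [l2 L2].
  { intros eps He. destruct (C eps He) as [N HN]. exists N. intros m n Hm Hn.
    eapply Rle_lt_trans; [|apply (HN m n Hm Hn)]. apply (norm2_snd (sub2 (u m) (u n))). }
  exists (l1, l2). intros eps He.
  destruct (L1 (eps/2)) as [N1 H1]; [lra|]. destruct (L2 (eps/2)) as [N2 H2]; [lra|].
  exists (max N1 N2). intros n Hn.
  pose proof (H1 n ltac:(lia)). pose proof (H2 n ltac:(lia)).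
  pose proof (norm2_le (sub2 (u n) (l1, l2))).
  change (norm2 (sub2 (u n) (l1, l2)) < eps). simpl fst in *. simpl snd in *. lra.
Qed.

Definition Prod : CHilbert.
Proof.
  refine {| hcar := X2 X; hzero := zero2; hadd := @add2 X; hopp := opp2; hscal := scal2;
            hinner := @inner2 X; hcomplete := prod_complete |}.
  - intros; apply pair_eq; simpl; apply hadd_assoc.
  - intros; apply pair_eq; simpl; apply hadd_comm.
  - intros; apply pair_eq; simpl; apply hadd_0.
  - intros; apply pair_eq; simpl; apply hadd_opp.
  - intros; apply pair_eq; simpl; apply hscal_assoc.
  - intros; apply pair_eq; simpl; apply hscal_1.
  - intros; apply pair_eq; simpl; apply hscal_addv.
  - intros; apply pair_eq; simpl; apply hscal_adds.
  - intros; unfold inner2; simpl. rewrite !hinner_addl. destruct (hinner X _ _), (hinner X _ _), (hinner X _ _), (hinner X _ _). cring.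
  - intros; unfold inner2; simpl. rewrite !hinner_scall. destruct (hinner X _ _), (hinner X _ _), a. cring.
  - intros; unfold inner2; simpl. rewrite (hinner_conj X (fst x)), (hinner_conj X (snd x)).
    destruct (hinner X _ _), (hinner X _ _). cring.
  - intros; unfold inner2. pose proof (re_pos X (fst x)). pose proof (re_pos X (snd x)). cunf. lra.
  - intros x E. unfold inner2 in E. pose proof (re_pos X (fst x)). pose proof (re_pos X (snd x)).
    pose proof (im_self X (fst x)). pose proof (im_self X (snd x)).
    apply pair_eq; simpl; apply hinner_def; apply Cx_eq;
    destruct (hinner X (fst x) (fst x)), (hinner X (snd x) (snd x)); unfold Cadd, C0, Cre in *; simpl in *;
    injection E; intros; lra.
Defined.

Lemma lim_prod (u : nat -> X2 X) l : lim (X:=Prod) u l <-> lim2 u l.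
Proof. reflexivity. Qed.

End Prod.

Section Pyth.
Variable H : CHilbert.
Lemma pyth (u v : H) : hinner H v u = C0 -> Cre (hinner H (hadd H u v) (hadd H u v)) = Cre (hinner H u u) + Cre (hinner H v v).
Proof.
  intro E. cexp. rewrite (hinner_conj H v u), E. destruct (hinner H u u), (hinner H v v). cunf. ring.
Qed.
Lemma pyth_le (u v : H) : hinner H v u = C0 -> norm u <= norm (hadd H u v) /\ norm v <= norm (hadd H u v).
Proof.
  intro E. pose proof (pyth u v E). unfold norm. pose proof (re_pos H u). pose proof (re_pos H v).
  split; apply sqrt_le_1_alt; lra.
Qed.
End Pyth.

Section Prod2.
Variable X : CHilbert.
Lemma norm2_tri (u v : X2 X) : norm2 (add2 u v) <= norm2 u + norm2 v.
Proof. exact (norm_triangle (Prod X) u v). Qed.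
Lemma norm2_subtri (u v : X2 X) : norm2 (sub2 u v) <= norm2 u + norm2 v.
Proof.
  pose proof (norm_triangle (Prod X) u (opp2 X v)). pose proof (norm_opp (Prod X) v).
  change (norm2 (add2 u (opp2 X v)) <= norm2 u + norm2 v). simpl in H0. unfold norm in H0. 
  change (norm2 (opp2 X v) = norm2 v) in H0. change (norm2 (add2 u (opp2 X v)) <= norm2 u + norm2 (opp2 X v)) in H.
  lra.
Qed.
Lemma norm2_pair_eq (u v : X2 X) : u = v -> norm2 u = norm2 v.
Proof. intros ->; auto. Qed.

Lemma proj2_le (R : Rel X) (P : X2 X -> X2 X) : is_proj2 R P -> forall z,
  norm2 (P z) <= norm2 z /\ norm2 (sub2 z (P z)) <= norm2 z.
Proof.
  intros HP z. destruct (HP z) as [Hin Ho].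
  assert (E : hinner (Prod X) (sub2 z (P z)) (P z) = C0).
  { simpl. rewrite (surjective_pairing (P z)) at 2. apply Ho; auto. }
  pose proof (pyth_le (Prod X) (P z) (sub2 z (P z)) E) as [L1 L2].
  assert (Z : hadd (Prod X) (P z) (sub2 z (P z)) = z).
  { apply pair_eq; simpl; veq. }
  rewrite Z in L1, L2. split; auto.
Qed.
End Prod2.


Section Rels.
Variable X : CHilbert.

Lemma opp_scal (x : X) : hopp X x = hscal X (-1, 0) x.
Proof. veq. Qed.

Lemma sub_zero (R : Rel X) : is_subspace R -> R (hzero X) (hzero X).
Proof. intros [? _]; auto. Qed.
Lemma sub_add (R : Rel X) : is_subspace R -> forall x f y g, R x f -> R y g -> R (hadd X x y) (hadd X f g).
Proof. intros [_ [? _]]; auto. Qed.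
Lemma sub_scal (R : Rel X) : is_subspace R -> forall a x f, R x f -> R (hscal X a x) (hscal X a f).
Proof. intros [_ [_ ?]]; auto. Qed.
Lemma sub_opp (R : Rel X) : is_subspace R -> forall x f, R x f -> R (hopp X x) (hopp X f).
Proof. intros SR x f Hr. rewrite !opp_scal. apply sub_scal; auto. Qed.
Lemma sub_sub (R : Rel X) : is_subspace R -> forall x f y g, R x f -> R y g -> R (vsub x y) (vsub f g).
Proof. intros SR x f y g H1 H2. unfold vsub. apply sub_add; auto. apply sub_opp; auto. Qed.

Lemma sub_eq (R : Rel X) x f x' f' : R x f -> x = x' -> f = f' -> R x' f'.
Proof. intros ? -> ->; auto. Qed.

Lemma op_part_iff (R : Rel X) x f : op_part R x f <-> R x f /\ forall g, R (hzero X) g -> hinner X f g = C0.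
Proof.
  unfold op_part, T_inf, inner2. simpl. split.
  - intros [Hr Ho]. split; auto. intros g Hg. specialize (Ho (hzero X) g (conj eq_refl Hg)).
    simpl in Ho. rewrite inner_0r in Ho. rewrite <- Ho. cring.
  - intros [Hr Ho]. split; auto. intros y g [-> Hg]. simpl. rewrite inner_0r, Ho; auto. cring.
Qed.

Definition R0 (R : Rel X) : X -> Prop := fun v => R (hzero X) v.

Lemma R0_subsp (R : Rel X) : is_subspace R -> subsp X (R0 R).
Proof.
  intro SR. unfold R0. split; [apply sub_zero; auto|split].
  - intros x y Hx Hy. apply (sub_eq R (hadd X (hzero X) (hzero X)) (hadd X x y)); [apply sub_add; auto|veq|auto].
  - intros a x Hx. apply (sub_eq R (hscal X a (hzero X)) (hscal X a x)); [apply sub_scal; auto|veq|auto].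
Qed.

Lemma lim_pair0 (u : nat -> X) l : lim u l -> lim2 (fun n => (hzero X, u n)) (hzero X, l).
Proof.
  intros L eps He. destruct (L eps He) as [N HN]. exists N. intros n Hn.
  eapply Rle_lt_trans; [apply norm2_le|]. simpl.
  replace (vsub (hzero X) (hzero X)) with (hzero X) by veq. rewrite norm_0. specialize (HN n Hn). lra.
Qed.

Lemma R0_closed (R : Rel X) : closed_rel R -> closed_set X (R0 R).
Proof.
  intros CR u l Hu L. unfold R0. apply (CR (fun n => (hzero X, u n)) (hzero X, l)); auto.
  apply lim_pair0; auto.
Qed.

Lemma op_exists (R : Rel X) : is_subspace R -> closed_rel R -> forall x g0, R x g0 -> exists f, op_part R x f.
Proof.
  intros SR CR x g0 Hg. destruct (proj_exists X (R0 R) (R0_subsp R SR) (R0_closed R CR) g0) as [p [Hp Ho]].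
  exists (vsub g0 p). apply op_part_iff. split.
  - apply (sub_eq R (vsub x (hzero X)) (vsub g0 p)); [apply sub_sub; auto|veq|auto].
  - intros g Hg'. apply Ho. exact Hg'.
Qed.

Lemma perp_subsp (V : X -> Prop) : subsp X (perp X V).
Proof.
  unfold perp. split; [|split].
  - intros; apply inner_0l.
  - intros x y Hx Hy v Hv. rewrite hinner_addl, Hx, Hy; auto. cring.
  - intros a x Hx v Hv. rewrite hinner_scall, Hx; auto. destruct a; cring.
Qed.

Lemma norm2_swap (a b : X) : norm2 (a, b) = norm2 (b, a).
Proof. unfold norm2, inner2. simpl. f_equal. destruct (hinner X a a), (hinner X b b). cunf. ring. Qed.

Lemma adj_closed (R : Rel X) : closed_rel (adj R).
Proof.
  intros z l Hz L x f Hr.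
  assert (Q : hinner (Prod X) (snd l, fst l) (x, hopp X f) = C0).
  { apply (lim_inner0 (Prod X) (fun n => (snd (z n), fst (z n)))).
    - intros eps He. destruct (L eps He) as [N HN]. exists N. intros n Hn. specialize (HN n Hn).
      change (norm2 (vsub (snd (z n)) (snd l), vsub (fst (z n)) (fst l)) < eps).
      rewrite norm2_swap. exact HN.
    - intro n. simpl. unfold inner2. simpl. rewrite inner_oppr, (Hz n x f Hr).
      destruct (hinner X (fst (z n)) f). cring. }
  simpl in Q. unfold inner2 in Q. simpl in Q. rewrite inner_oppr in Q.
  destruct (hinner X (snd l) x), (hinner X (fst l) f). unfold Cadd, Copp, C0 in Q. simpl in Q.
  injection Q; intros. apply Cx_eq; simpl; lra.
Qed.

End Rels.


Section Lin.
Variable X : CHilbert.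

Lemma op_part_sub (R : Rel X) : is_subspace R -> forall x f y g,
  op_part R x f -> op_part R y g -> op_part R (vsub x y) (vsub f g).
Proof.
  intros SR x f y g H1 H2. apply op_part_iff in H1, H2. apply op_part_iff.
  destruct H1 as [H1 O1], H2 as [H2 O2]. split; [apply sub_sub; auto|].
  intros h Hh. unfold vsub. rewrite hinner_addl, inner_oppl, O1, O2; auto. cring.
Qed.

Lemma op_part_scal (R : Rel X) : is_subspace R -> forall c x f,
  op_part R x f -> op_part R (hscal X c x) (hscal X c f).
Proof.
  intros SR c x f H1. apply op_part_iff in H1. apply op_part_iff.
  destruct H1 as [H1 O1]. split; [apply sub_scal; auto|].
  intros h Hh. rewrite hinner_scall, O1; auto. destruct c; cring.
Qed.

Lemma proj_sub (V : X -> Prop) : subsp X V -> forall a q b r,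
  is_proj_of X V a q -> is_proj_of X V b r -> is_proj_of X V (vsub a b) (vsub q r).
Proof.
  intros [V0 [VA VS]] a q b r [P1 O1] [P2 O2]. split.
  - unfold vsub. apply VA; auto. rewrite opp_scal. apply VS; auto.
  - intros w Hw. replace (vsub (vsub a b) (vsub q r)) with (vsub (vsub a q) (vsub b r)) by veq.
    unfold vsub at 1. rewrite hinner_addl, inner_oppl, O1, O2; auto. cring.
Qed.

Lemma proj_scal (V : X -> Prop) : subsp X V -> forall c a q,
  is_proj_of X V a q -> is_proj_of X V (hscal X c a) (hscal X c q).
Proof.
  intros [V0 [VA VS]] c a q [P1 O1]. split.
  - apply VS; auto.
  - intros w Hw. replace (vsub (hscal X c a) (hscal X c q)) with (hscal X c (vsub a q)) by veq.
    rewrite hinner_scall, O1; auto. destruct c; cring.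
Qed.

End Lin.

Section Main.
Variable X : CHilbert.
Variables T S A : Rel X.
Hypothesis HT : is_subspace T.
Hypothesis HS : is_subspace S.
Hypothesis HA : is_subspace A.
Hypothesis cT : closed_rel T.
Hypothesis hT : hermitian T.
Hypothesis cA : closed_rel A.
Hypothesis hA : hermitian A.
Hypothesis saS : selfadjoint S.
Hypothesis domTS : forall x, dom T x <-> dom S x.
Hypothesis domSA : forall x, dom S x -> dom A x.
Hypothesis sumT : forall x h, T x h <-> rel_sum S A x h.

Notation M := (R0 X S).
Notation "<< x , y >>" := (hinner X x y).

Lemma hermS : hermitian S.
Proof. intros x f Hf. apply saS; auto. Qed.

Lemma closedS : closed_rel S.
Proof. intros z l Hz L. apply saS. apply (adj_closed X S z l); auto. intro n; apply saS; auto. Qed.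

Lemma F1 x f : S x f -> perp X M x.
Proof.
  intros Hf m Hm. pose proof (hermS x f Hf (hzero X) m Hm) as E.
  rewrite inner_0r in E. auto.
Qed.

Lemma F4 v : (forall x, dom S x -> << v, x >> = C0) -> M v.
Proof.
  intro Hv. apply saS. intros x f Hf. rewrite inner_0l. apply Hv. exists f; auto.
Qed.

Lemma T0S h : T (hzero X) h -> M h.
Proof.
  intros Hh. apply F4. intros x [f Hf].
  destruct (proj2 (domTS x) (ex_intro _ f Hf)) as [f' Hf'].
  rewrite (hT _ _ Hh x f' Hf'). apply inner_0l.
Qed.

Lemma S0T h : M h -> T (hzero X) h.
Proof.
  intro Hh. apply sumT. exists h, (hzero X). repeat split; auto. apply sub_zero; auto.
  rewrite hadd_0; auto.
Qed.

Lemma A0S g : A (hzero X) g -> M g.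
Proof.
  intro Hg. apply T0S. apply sumT. exists (hzero X), g. repeat split; auto. apply sub_zero; auto.
  rewrite hadd_0l; auto.
Qed.

Lemma Maq x a q : op_part A x a -> is_proj_of X (perp X (img S (hzero X))) a q -> M (vsub a q).
Proof.
  intros _ [Pq Oq]. apply F4. intros x' [f' Hf']. apply Oq. apply (F1 x' f' Hf').
Qed.

Lemma Msub u v : M u -> M v -> M (vsub u v).
Proof.
  intros Hu Hv. unfold R0 in *. apply (sub_eq X S (vsub (hzero X) (hzero X)) (vsub u v)); [apply sub_sub; auto|veq|auto].
Qed.
Lemma Madd u v : M u -> M v -> M (hadd X u v).
Proof. apply (R0_subsp X S HS). Qed.

Lemma F5 x q f : QAs S A x q -> S x f -> T x (hadd X f q).
Proof.
  intros [a [Ha Pq]] Hf. pose proof (Maq x a q Ha Pq) as Mm.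
  apply sumT. exists (vsub f (vsub a q)), a. split; [|split].
  - apply (sub_eq X S (vsub x (hzero X)) (vsub f (vsub a q))); [apply sub_sub; auto|veq|auto].
  - apply Ha.
  - veq.
Qed.

Lemma F6 x q f h : QAs S A x q -> S x f -> T x h -> M (vsub (vsub h f) q).
Proof.
  intros [a [Ha Pq]] Hf Hh. pose proof (Maq x a q Ha Pq) as Mm.
  apply sumT in Hh. destruct Hh as [f' [g [Hf' [Hg ->]]]].
  assert (M1 : M (vsub f' f)).
  { unfold R0. apply (sub_eq X S (vsub x x) (vsub f' f)); [apply sub_sub; auto|veq|auto]. }
  assert (M2 : M (vsub g a)).
  { apply A0S. apply (sub_eq X A (vsub x x) (vsub g a)); [apply sub_sub; auto; apply Ha|veq|auto]. }
  replace (vsub (vsub (hadd X f' g) f) q) with (hadd X (hadd X (vsub f' f) (vsub g a)) (vsub a q)) by veq.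
  apply Madd; auto. apply Madd; auto.
Qed.

Lemma F7 x q : QAs S A x q -> perp X M q.
Proof. intros [a [_ [P _]]]. exact P. Qed.

Lemma F8 x q f w r g : QAs S A x q -> QAs S A w r -> S x f -> S w g -> << q, w >> = << x, r >>.
Proof.
  intros Qx Qw Hf Hg.
  pose proof (hT _ _ (F5 x q f Qx Hf) w (hadd X g r) (F5 w r g Qw Hg)) as E1.
  pose proof (hermS x f Hf w g Hg) as E2.
  rewrite hinner_addl, inner_addr in E1.
  rewrite E2 in E1. destruct (<< x, g >>), (<< q, w >>), (<< x, r >>).
  unfold Cadd in E1. injection E1; intros. apply Cx_eq; simpl; lra.
Qed.

Lemma Kexist x : dom S x -> exists q, QAs S A x q.
Proof.
  intros Dx. destruct (domSA x Dx) as [g0 Hg0].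
  destruct (op_exists X A HA cA x g0 Hg0) as [a Ha].
  destruct (proj_exists X (perp X M) (perp_subsp X _) (perp_closed X _) a) as [q [Pq Oq]].
  exists q, a. split; auto. split; auto.
Qed.

Lemma Sexist x : dom S x -> exists f, op_part S x f.
Proof. intros [g0 Hg0]. apply (op_exists X S HS closedS x g0 Hg0). Qed.

Lemma QAs_sub x q y r : QAs S A x q -> QAs S A y r -> QAs S A (vsub x y) (vsub q r).
Proof.
  intros [a [Ha Pa]] [b [Hb Pb]]. exists (vsub a b). split.
  - apply op_part_sub; auto.
  - apply proj_sub; auto. apply perp_subsp.
Qed.

Lemma QAs_scal c x q : QAs S A x q -> QAs S A (hscal X c x) (hscal X c q).
Proof.
  intros [a [Ha Pa]]. exists (hscal X c a). split.
  - apply op_part_scal; auto.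
  - apply proj_scal; auto. apply perp_subsp.
Qed.


Lemma strict_ge (phi : nat -> nat) : strict_incr phi -> forall n, (n <= phi n)%nat.
Proof. intros Hp n. induction n; [lia|]. specialize (Hp n). lia. Qed.

Lemma norm_diff_le (f q : X) : norm f - norm (hadd X f q) <= norm q.
Proof.
  replace f with (hadd X (hadd X f q) (hopp X q)) at 1 by veq.
  pose proof (norm_triangle X (hadd X f q) (hopp X q)). rewrite norm_opp in H. lra.
Qed.

Lemma domS_subsp : subsp X (dom S).
Proof.
  split; [|split].
  - exists (hzero X). apply sub_zero; auto.
  - intros x y [f Hf] [g Hg]. exists (hadd X f g). apply sub_add; auto.
  - intros a x [f Hf]. exists (hscal X a f). apply sub_scal; auto.
Qed.

Lemma RB : rel_compact (QAs S A) (op_part S) ->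
  exists C, 0 <= C /\ forall x f q, op_part S x f -> QAs S A x q ->
     norm f <= C * (norm x + norm (hadd X f q)).
Proof.
  intro Kc. apply NNPP. intro NC.
  assert (Ex : forall n : nat, exists t : X * X * X, op_part S (fst (fst t)) (snd (fst t)) /\ QAs S A (fst (fst t)) (snd t) /\
     (INR n + 1) * (norm (fst (fst t)) + norm (hadd X (snd (fst t)) (snd t))) < norm (snd (fst t))).
  { intro n. apply NNPP. intro NE. apply NC. exists (INR n + 1). split; [pose proof (pos_INR n); lra|].
    intros x f q Hf Hq. apply Rnot_lt_le. intro L. apply NE. exists (x, f, q). simpl. auto. }
  destruct (choice_nat _ Ex) as [ts Hts].
  set (c := fun n => / norm (snd (fst (ts n)))).
  assert (Npos : forall n, 0 < norm (snd (fst (ts n)))).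
  { intro n. destruct (Hts n) as [_ [_ L]]. pose proof (pos_INR n).
    pose proof (norm_ge0 X (fst (fst (ts n)))). pose proof (norm_ge0 X (hadd X (snd (fst (ts n))) (snd (ts n)))).
    nra. }
  assert (cpos : forall n, 0 < c n) by (intro n; apply Rinv_0_lt_compat; auto).
  set (xs := fun n => hscal X (c n, 0) (fst (fst (ts n)))).
  set (fs := fun n => hscal X (c n, 0) (snd (fst (ts n)))).
  set (qs := fun n => hscal X (c n, 0) (snd (ts n))).
  assert (Hf : forall n, op_part S (xs n) (fs n)) by (intro n; apply op_part_scal; auto; apply Hts).
  assert (Hq : forall n, QAs S A (xs n) (qs n)) by (intro n; apply QAs_scal; auto; apply Hts).
  assert (Nf : forall n, norm (fs n) = 1).
  { intro n. unfold fs. rewrite norm_scal_real. rewrite Rabs_right; [|left; apply cpos].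
    unfold c. specialize (Npos n). field. lra. }
  assert (Nsmall : forall n, (INR n + 1) * (norm (xs n) + norm (hadd X (fs n) (qs n))) < 1).
  { intro n. destruct (Hts n) as [_ [_ L]].
    replace (hadd X (fs n) (qs n)) with (hscal X (c n, 0) (hadd X (snd (fst (ts n))) (snd (ts n)))) by (unfold fs, qs; veq).
    unfold xs. rewrite !norm_scal_real. rewrite Rabs_right; [|left; apply cpos].
    specialize (Npos n). unfold c.
    apply Rmult_lt_compat_r with (r := / norm (snd (fst (ts n)))) in L; [|apply Rinv_0_lt_compat; auto].
    rewrite Rinv_r in L by lra. eapply Rle_lt_trans; [|exact L]. right. ring. }
  assert (Nx : forall n, norm (xs n) <= / (INR n + 1)).
  { intro n. specialize (Nsmall n). pose proof (pos_INR n). pose proof (norm_ge0 X (hadd X (fs n) (qs n))).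
    apply Rmult_le_reg_l with (INR n + 1); [lra|]. rewrite Rinv_r by lra. nra. }
  assert (Nfq : forall n, norm (hadd X (fs n) (qs n)) <= / (INR n + 1)).
  { intro n. specialize (Nsmall n). pose proof (pos_INR n). pose proof (norm_ge0 X (xs n)).
    apply Rmult_le_reg_l with (INR n + 1); [lra|]. rewrite Rinv_r by lra. nra. }
  assert (inv_le1 : forall n, / (INR n + 1) <= 1).
  { intro n. rewrite <- Rinv_1. apply Rinv_le_contravar; [lra|]. pose proof (pos_INR n); lra. }
  destruct (Kc xs fs qs 2 Hf Hq) as [phi [y [Hphi Ly]]].
  { intro n. rewrite Nf. specialize (Nx n). specialize (inv_le1 n). lra. }
  assert (Ry : forall w, dom S w -> Cre << y, w >> = 0).
  { intros w Dw. destruct (Kexist w Dw) as [r Hr]. destruct Dw as [g Hg].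
    apply small_0'; intros eps He.
    destruct (Ly (eps / (2 * (norm w + 1)))) as [N1 HN1].
    { apply Rdiv_lt_0_compat; [auto|]. pose proof (norm_ge0 X w); lra. }
    destruct (inv_small (eps / (2 * (norm r + 1)))) as [N2 HN2].
    { apply Rdiv_lt_0_compat; [auto|]. pose proof (norm_ge0 X r); lra. }
    set (k := max N1 N2). specialize (HN1 k (Nat.le_max_l _ _)).
    assert (Hk : / (INR (phi k) + 1) < eps / (2 * (norm r + 1))).
    { apply HN2. pose proof (strict_ge phi Hphi k). unfold k in *. lia. }
    assert (E8 : << qs (phi k), w >> = << xs (phi k), r >>).
    { apply (F8 _ _ (fs (phi k)) _ _ g); auto. apply Hf. }
    replace y with (hadd X (qs (phi k)) (hopp X (vsub (qs (phi k)) y))) by veq.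
    rewrite hinner_addl, inner_oppl, E8.
    pose proof (CS_abs X (xs (phi k)) r). pose proof (CS_abs X (vsub (qs (phi k)) y) w).
    pose proof (Nx (phi k)). pose proof (norm_ge0 X w). pose proof (norm_ge0 X r).
    pose proof (norm_ge0 X (xs (phi k))). pose proof (norm_ge0 X (vsub (qs (phi k)) y)).
    assert (B1 : norm (xs (phi k)) * norm r <= eps / 2).
    { apply Rle_trans with (eps / (2 * (norm r + 1)) * norm r). apply Rmult_le_compat_r; lra.
      unfold Rdiv. rewrite Rinv_mult. apply Rmult_le_reg_r with (norm r + 1); [lra|].
      field_simplify; [|lra]. nra. }
    assert (B2 : norm (vsub (qs (phi k)) y) * norm w <= eps / 2).
    { apply Rle_trans with (eps / (2 * (norm w + 1)) * norm w). apply Rmult_le_compat_r; lra.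
      unfold Rdiv. rewrite Rinv_mult. apply Rmult_le_reg_r with (norm w + 1); [lra|].
      field_simplify; [|lra]. nra. }
    cunf. apply abs_le_inv in H. apply abs_le_inv in H0. apply Rabs_le. lra. }
  assert (y0 : y = hzero X).
  { assert (My : M y).
    { apply F4. intros x Dx. apply (orth_of_re X y (dom S) domS_subsp Ry x Dx). }
    assert (Py : perp X M y).
    { apply (perp_closed X M (fun k => qs (phi k)) y); auto. intro k. apply (F7 (xs (phi k))). apply Hq. }
    apply hinner_def. apply Py. exact My. }
  subst y.
  destruct (Ly (1/2)) as [N HN]; [lra|].
  set (k := max N 1). specialize (HN k (Nat.le_max_l _ _)).
  replace (vsub (qs (phi k)) (hzero X)) with (qs (phi k)) in HN by veq.
  pose proof (norm_diff_le (fs (phi k)) (qs (phi k))). rewrite Nf in H.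
  specialize (Nfq (phi k)).
  assert (/ (INR (phi k) + 1) <= / 2).
  { apply Rinv_le_contravar; [lra|]. pose proof (strict_ge phi Hphi k).
    assert (1 <= phi k)%nat by (unfold k in *; lia). apply le_INR in H1. simpl in H1. lra. }
  lra.
Qed.


Lemma perpM_le (u m : X) : perp X M u -> M m -> norm u <= norm (hadd X u m).
Proof.
  intros Pu Mm. apply (pyth_le X u m). rewrite hinner_conj, (Pu m Mm). cring.
Qed.

Lemma key (z : X2 X) pa pal qb qbe ka kb :
  T pa pal -> S qb qbe ->
  (forall x f, T x f -> inner2 (sub2 z (pa, pal)) (x, f) = C0) ->
  (forall x f, S x f -> inner2 (sub2 z (qb, qbe)) (x, f) = C0) ->
  QAs S A pa ka -> QAs S A qb kb ->
  norm2 (vsub pa qb, vsub pal qbe) * norm2 (vsub pa qb, vsub pal qbe) <=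
    norm2 (sub2 z (qb, qbe)) * norm (vsub ka kb) + norm2 (vsub pa qb, vsub pal qbe) * norm kb.
Proof.
  intros Tp Sq OT OS Ka Kb.
  assert (Tq : T qb (hadd X qbe kb)) by (apply F5; auto).
  assert (Tt : T (vsub pa qb) (vsub (vsub pal qbe) kb)).
  { apply (sub_eq X T (vsub pa qb) (vsub pal (hadd X qbe kb))); [apply sub_sub; auto|auto|veq]. }
  assert (Dpa : dom S pa) by (apply domTS; exists pal; auto).
  assert (Dd : dom S (vsub pa qb)).
  { destruct Dpa as [fp Hfp]. exists (vsub fp qbe). apply sub_sub; auto. }
  destruct Dd as [sg Hsg].
  assert (Kd : QAs S A (vsub pa qb) (vsub ka kb)) by (apply QAs_sub; auto).
  pose proof (F6 _ _ _ _ Kd Hsg Tt) as Mm.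
  set (m := vsub (vsub (vsub (vsub pal qbe) kb) sg) (vsub ka kb)) in Mm.
  pose proof (OS _ _ Hsg) as E1.
  pose proof (OS _ _ Mm) as E2.
  pose proof (OT _ _ Tt) as E3.
  assert (EQ : Cre (inner2 (vsub pa qb, vsub pal qbe) (vsub pa qb, vsub pal qbe)) =
     Cre (hinner X (snd (sub2 z (qb, qbe))) (vsub ka kb)) + Cre (hinner X (vsub pal qbe) kb)).
  { unfold m, inner2, sub2 in *. simpl in *. unfold vsub in *.
    cexpH E1. cexpH E2. cexpH E3. cexp.
    apply (f_equal fst) in E1. apply (f_equal fst) in E2. apply (f_equal fst) in E3.
    cunf. lra. }
  unfold norm2 at 1 2. rewrite sqrt_sqrt by (unfold inner2; pose proof (re_pos X (vsub pa qb)); pose proof (re_pos X (vsub pal qbe)); cunf; lra).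
  rewrite EQ.
  pose proof (CS X (snd (sub2 z (qb, qbe))) (vsub ka kb)).
  pose proof (CS X (vsub pal qbe) kb).
  pose proof (norm2_snd X (sub2 z (qb, qbe))).
  pose proof (norm2_snd X (vsub pa qb, vsub pal qbe)). simpl snd in H1.
  pose proof (norm_ge0 X (vsub ka kb)). pose proof (norm_ge0 X kb).
  apply Rplus_le_compat.
  - eapply Rle_trans; [exact H|]. apply Rmult_le_compat_r; auto.
  - eapply Rle_trans; [exact H0|]. apply Rmult_le_compat_r; auto.
Qed.


Lemma sub_lim {H : CHilbert} (u : nat -> H) l phi : lim u l -> strict_incr phi -> lim (fun n => u (phi n)) l.
Proof.
  intros L Hp eps He. destruct (L eps He) as [N HN]. exists N. intros n Hn. apply HN.
  pose proof (strict_ge phi Hp n). lia.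
Qed.

Lemma strict_comp phi psi : strict_incr phi -> strict_incr psi -> strict_incr (fun n => phi (psi n)).
Proof.
  intros H1 H2 n. assert (forall a b, (a < b)%nat -> (phi a < phi b)%nat).
  { intros a b Hab. induction Hab. apply H1. specialize (H1 m). lia. }
  apply H. apply H2.
Qed.

Lemma orth_diff (R : Rel X) (z1 z2 p1 p2 : X2 X) :
  (forall x f, R x f -> inner2 (sub2 z1 p1) (x, f) = C0) ->
  (forall x f, R x f -> inner2 (sub2 z2 p2) (x, f) = C0) ->
  forall x f, R x f -> inner2 (sub2 (sub2 z1 z2) (vsub (fst p1) (fst p2), vsub (snd p1) (snd p2))) (x, f) = C0.
Proof.
  intros O1 O2 x f Hr. pose proof (O1 x f Hr) as E1. pose proof (O2 x f Hr) as E2.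
  unfold inner2, sub2 in *. simpl in *. unfold vsub in *. cexpH E1. cexpH E2. cexp.
  apply Cx_eq; [apply (f_equal fst) in E1; apply (f_equal fst) in E2|apply (f_equal snd) in E1; apply (f_equal snd) in E2];
  cunf; lra.
Qed.

Lemma part1 : rel_compact (QAs S A) (op_part S) -> compact_perturbation T S.
Proof.
  intros Kc PT PS HPT HPS z B Hz.
  destruct (RB Kc) as [C [C0' HC]].
  assert (B0 : 0 <= B) by (eapply Rle_trans; [apply (norm_ge0 (Prod X) (z O))|apply Hz]).
  set (a := fun n => fst (PT (z n))). set (al := fun n => snd (PT (z n))).
  set (b := fun n => fst (PS (z n))). set (be := fun n => snd (PS (z n))).
  assert (Ta : forall n, T (a n) (al n)) by (intro n; apply HPT).
  assert (Sb : forall n, S (b n) (be n)) by (intro n; apply HPS).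
  assert (Da : forall n, dom S (a n)) by (intro n; apply domTS; exists (al n); auto).
  assert (Db : forall n, dom S (b n)) by (intro n; exists (be n); auto).
  destruct (choice_nat (fun n f => op_part S (a n) f)) as [fa Hfa]; [intro n; apply Sexist; auto|].
  destruct (choice_nat (fun n f => QAs S A (a n) f)) as [ka Hka]; [intro n; apply Kexist; auto|].
  destruct (choice_nat (fun n f => op_part S (b n) f)) as [fb Hfb]; [intro n; apply Sexist; auto|].
  destruct (choice_nat (fun n f => QAs S A (b n) f)) as [kb Hkb]; [intro n; apply Kexist; auto|].
  assert (BT : forall n, norm2 (PT (z n)) <= B /\ norm2 (sub2 (z n) (PT (z n))) <= B).
  { intro n. destruct (proj2_le X T PT HPT (z n)). specialize (Hz n). lra. }
  assert (BS : forall n, norm2 (PS (z n)) <= B /\ norm2 (sub2 (z n) (PS (z n))) <= B).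
  { intro n. destruct (proj2_le X S PS HPS (z n)). specialize (Hz n). lra. }
  assert (Na : forall n, norm (a n) <= B /\ norm (al n) <= B).
  { intro n. pose proof (norm2_fst X (PT (z n))). pose proof (norm2_snd X (PT (z n))). destruct (BT n).
    unfold a, al; lra. }
  assert (Nb : forall n, norm (b n) <= B /\ norm (be n) <= B).
  { intro n. pose proof (norm2_fst X (PS (z n))). pose proof (norm2_snd X (PS (z n))). destruct (BS n).
    unfold b, be; lra. }
  assert (Nfka : forall n, norm (hadd X (fa n) (ka n)) <= norm (al n)).
  { intro n. pose proof (Hfa n) as Hf. apply op_part_iff in Hf. destruct Hf as [Hf Of].
    pose proof (F6 _ _ _ _ (Hka n) Hf (Ta n)) as Mm.
    replace (al n) with (hadd X (hadd X (fa n) (ka n)) (vsub (vsub (al n) (fa n)) (ka n))) by veq.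
    apply perpM_le; auto. apply (perp_subsp X M). exact Of. apply (F7 (a n)); auto. }
  assert (Nfa : forall n, norm (a n) + norm (fa n) <= B + 2 * C * B).
  { intro n. pose proof (HC _ _ _ (Hfa n) (Hka n)). pose proof (Nfka n). destruct (Na n). nra. }
  assert (Nfb : forall n, norm (b n) + norm (fb n) <= 2 * B).
  { intro n. pose proof (Hfb n) as Hf. apply op_part_iff in Hf. destruct Hf as [Hf Of].
    assert (Mm : M (vsub (be n) (fb n))).
    { unfold R0. apply (sub_eq X S (vsub (b n) (b n)) (vsub (be n) (fb n))); [apply sub_sub; auto|veq|auto]. }
    assert (norm (fb n) <= norm (be n)).
    { replace (be n) with (hadd X (fb n) (vsub (be n) (fb n))) by veq. apply perpM_le; auto. }
    destruct (Nb n). lra. }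
  destruct (Kc b fb kb (2 * B) Hfb Hkb Nfb) as [phi1 [l1 [Hp1 L1]]].
  destruct (Kc (fun n => a (phi1 n)) (fun n => fa (phi1 n)) (fun n => ka (phi1 n)) (B + 2 * C * B))
    as [phi2 [l2 [Hp2 L2]]]; [intro n; apply Hfa|intro n; apply Hka|intro n; apply Nfa|].
  set (psi := fun n => phi1 (phi2 n)).
  assert (Hpsi : strict_incr psi) by exact (strict_comp phi1 phi2 Hp1 Hp2).
  assert (Ckb : cauchy X (fun n => kb (psi n))) by (apply (lim_cauchy X _ l1); apply (sub_lim (fun n => kb (phi1 n))); auto).
  assert (Cka : cauchy X (fun n => ka (psi n))) by (apply (lim_cauchy X _ l2); auto).
  assert (Cd : cauchy (Prod X) (fun n => sub2 (PT (z (psi n))) (PS (z (psi n))))).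
  { intros eps He.
    set (del := eps * eps / (8 * B + 1)).
    assert (Hdel : 0 < del) by (unfold del; apply Rdiv_lt_0_compat; nra).
    destruct (Ckb (del / 2)) as [N1 HN1]; [lra|]. destruct (Cka (del / 2)) as [N2 HN2]; [lra|].
    exists (max N1 N2). intros m n Hm Hn.
    pose proof (HN1 m n ltac:(lia) ltac:(lia)) as K1. pose proof (HN2 m n ltac:(lia) ltac:(lia)) as K2.
    set (m' := psi m). set (n' := psi n). fold m' n' in K1, K2.
    assert (Kd : QAs S A (vsub (a m') (a n')) (vsub (ka m') (ka n'))) by (apply QAs_sub; auto).
    assert (Kd' : QAs S A (vsub (b m') (b n')) (vsub (kb m') (kb n'))) by (apply QAs_sub; auto).
    pose proof (key (sub2 (z m') (z n')) (vsub (a m') (a n')) (vsub (al m') (al n'))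
                 (vsub (b m') (b n')) (vsub (be m') (be n')) (vsub (ka m') (ka n')) (vsub (kb m') (kb n'))
                 ltac:(apply sub_sub; auto) ltac:(apply sub_sub; auto)
                 (orth_diff T (z m') (z n') (PT (z m')) (PT (z n')) (proj2 (HPT (z m'))) (proj2 (HPT (z n'))))
                 (orth_diff S (z m') (z n') (PS (z m')) (PS (z n')) (proj2 (HPS (z m'))) (proj2 (HPS (z n'))))
                 Kd Kd') as KEY.
    set (D := norm2 (vsub (vsub (a m') (a n')) (vsub (b m') (b n')), vsub (vsub (al m') (al n')) (vsub (be m') (be n')))) in KEY.
    assert (ED : norm (vsub (X := Prod X) (sub2 (PT (z m')) (PS (z m'))) (sub2 (PT (z n')) (PS (z n')))) = D).
    { change (norm2 (sub2 (sub2 (PT (z m')) (PS (z m'))) (sub2 (PT (z n')) (PS (z n')))) = D).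
      unfold D. apply norm2_pair_eq. apply pair_eq; simpl; unfold a, b, al, be; veq. }
    rewrite ED.
    assert (DB : D <= 4 * B).
    { unfold D. rewrite (norm2_pair_eq X _ (sub2 (sub2 (PT (z m')) (PS (z m'))) (sub2 (PT (z n')) (PS (z n')))))
        by (apply pair_eq; simpl; unfold a, b, al, be; veq).
      pose proof (norm2_subtri X (sub2 (PT (z m')) (PS (z m'))) (sub2 (PT (z n')) (PS (z n')))).
      pose proof (norm2_subtri X (PT (z m')) (PS (z m'))). pose proof (norm2_subtri X (PT (z n')) (PS (z n'))).
      destruct (BT m'), (BT n'), (BS m'), (BS n'). lra. }
    assert (ZB : norm2 (sub2 (sub2 (z m') (z n')) (vsub (b m') (b n'), vsub (be m') (be n'))) <= 2 * B).
    { rewrite (norm2_pair_eq X _ (sub2 (sub2 (z m') (PS (z m'))) (sub2 (z n') (PS (z n')))))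
        by (apply pair_eq; simpl; unfold a, b, al, be; veq).
      pose proof (norm2_subtri X (sub2 (z m') (PS (z m'))) (sub2 (z n') (PS (z n')))).
      destruct (BS m'), (BS n'). lra. }
    assert (KB : norm (vsub (vsub (ka m') (ka n')) (vsub (kb m') (kb n'))) <= del).
    { replace (vsub (vsub (ka m') (ka n')) (vsub (kb m') (kb n'))) with
        (hadd X (vsub (ka m') (ka n')) (hopp X (vsub (kb m') (kb n')))) by veq.
      pose proof (norm_triangle X (vsub (ka m') (ka n')) (hopp X (vsub (kb m') (kb n')))).
      rewrite norm_opp in H. lra. }
    pose proof (norm_ge0 (Prod X) (vsub (X := Prod X) (sub2 (PT (z m')) (PS (z m'))) (sub2 (PT (z n')) (PS (z n'))))) as D0.
    rewrite ED in D0.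
    pose proof (norm_ge0 X (vsub (ka m') (ka n'))). pose proof (norm_ge0 X (vsub (kb m') (kb n'))).
    pose proof (norm_ge0 (Prod X) (sub2 (sub2 (z m') (z n')) (vsub (b m') (b n'), vsub (be m') (be n')))) as Z0.
    change (0 <= norm2 (sub2 (sub2 (z m') (z n')) (vsub (b m') (b n'), vsub (be m') (be n')))) in Z0.
    assert (D * D <= 8 * B * del).
    { eapply Rle_trans; [exact KEY|]. nra. }
    assert (8 * B * del < eps * eps).
    { unfold del. apply Rmult_lt_reg_r with (8 * B + 1); [lra|].
      replace (8 * B * (eps * eps / (8 * B + 1)) * (8 * B + 1)) with (8 * B * (eps * eps)) by (field; lra). nra. }
    nra. }
  destruct (cauchy_lim (Prod X) _ Cd) as [l Ll].
  exists psi, l. split; auto.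
Qed.


Lemma choice_fun {A0 B0 : Type} (P : A0 -> B0 -> Prop) :
  (forall x, exists y, P x y) -> exists f : A0 -> B0, forall x, P x (f x).
Proof.
  intro Hx. exists (fun n => proj1_sig (constructive_indefinite_description _ (Hx n))).
  intro n. exact (proj2_sig (constructive_indefinite_description _ (Hx n))).
Qed.

Lemma proj2_exists (R : Rel X) : is_subspace R -> closed_rel R -> exists P, is_proj2 R P.
Proof.
  intros SR CR.
  set (V := fun z : Prod X => R (fst z) (snd z)).
  assert (SV : subsp (Prod X) V).
  { unfold V. split; [|split]; simpl.
    - apply sub_zero; auto.
    - intros x y Hx Hy. apply sub_add; auto.
    - intros c x Hx. apply sub_scal; auto. }
  assert (CV : closed_set (Prod X) V) by (intros u l Hu L; apply (CR u l); auto).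
  destruct (choice_fun (fun z p => V p /\ forall w, V w -> hinner (Prod X) (vsub z p) w = C0)) as [P HP].
  { intro z. apply (proj_exists (Prod X) V SV CV z). }
  exists P. intro z. destruct (HP z) as [H1 H2]. split; auto.
  intros x f Hr. apply (H2 (x, f)). exact Hr.
Qed.

Lemma proj2_fix (R : Rel X) (P : X2 X -> X2 X) : is_subspace R -> is_proj2 R P ->
  forall x f, R x f -> P (x, f) = (x, f).
Proof.
  intros SR HP x f Hr. destruct (HP (x, f)) as [H1 H2].
  set (w := sub2 (x, f) (P (x, f))).
  assert (Rw : R (fst w) (snd w)) by (unfold w, sub2; simpl; apply sub_sub; auto).
  pose proof (H2 _ _ Rw) as E. rewrite <- surjective_pairing in E.
  pose proof (hinner_def (Prod X) w E) as W0.
  unfold w in W0. destruct (P (x, f)) as [p1 p2]. unfold sub2 in W0. simpl in W0.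
  injection W0; intros E2 E1. unfold vsub in *. apply pair_eq; simpl.
  - symmetry. apply vec_eq_of. rewrite E1. apply inner_0l.
  - symmetry. apply vec_eq_of. rewrite E2. apply inner_0l.
Qed.

Lemma MperpM0 w : M w -> perp X M w -> w = hzero X.
Proof. intros Mw Pw. apply hinner_def. apply Pw; auto. Qed.

Lemma part2 : compact_perturbation T S -> bounded_rel (op_part T) -> rel_compact (QAs S A) (op_part S).
Proof.
  intros CP [Cb0 HB] xs ys us Mb Hy Hu Hb.
  set (Cb := Rmax Cb0 0).
  assert (HB' : forall x f, op_part T x f -> norm f <= Cb * norm x).
  { intros x f Hf. eapply Rle_trans; [apply (HB x f Hf)|]. apply Rmult_le_compat_r; [apply norm_ge0|apply Rmax_l]. }
  assert (Cb0' : 0 <= Cb) by apply Rmax_r.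
  destruct (proj2_exists T HT cT) as [PT HPT].
  destruct (proj2_exists S HS closedS) as [PS HPS].
  set (s := fun n => (xs n, ys n)).
  destruct (CP PT PS HPT HPS s Mb) as [phi [l [Hphi Ll]]].
  { intro n. eapply Rle_trans; [apply norm2_le|]. apply Hb. }
  set (e := fun n => sub2 (PT (s n)) (PS (s n))).
  assert (Ee : forall n, e n = sub2 (PT (s n)) (s n)).
  { intro n. unfold e, s. rewrite (proj2_fix S PS HS HPS (xs n) (ys n)); auto. apply Hy. }
  assert (Ce : cauchy (Prod X) (fun n => e (phi n))) by (apply (lim_cauchy (Prod X) _ l); exact Ll).
  assert (Tt : forall n, T (xs n) (hadd X (ys n) (us n))) by (intro n; apply F5; auto; apply Hy).
  assert (Pu : forall n, perp X M (us n)) by (intro n; apply (F7 (xs n)); auto).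
  assert (Oy : forall n m0, M m0 -> hinner X (vsub (ys n) (snd (PT (s n)))) m0 = C0).
  { intros n m0 Hm. pose proof (proj2 (HPT (s n)) (hzero X) m0 (S0T m0 Hm)) as E.
    unfold inner2, sub2 in E. simpl in E. rewrite inner_0r in E. rewrite <- E. cring. }
  assert (BND : forall m n, norm (vsub (us m) (us n)) <= (Cb + 1) * norm2 (sub2 (e n) (e m))).
  { intros m n.
    set (b := vsub (vsub (xs m) (fst (PT (s m)))) (vsub (xs n) (fst (PT (s n))))).
    set (be := vsub (vsub (hadd X (ys m) (us m)) (snd (PT (s m)))) (vsub (hadd X (ys n) (us n)) (snd (PT (s n))))).
    set (u := vsub (us m) (us n)).
    assert (Tb : T b be).
    { apply sub_sub; auto; apply sub_sub; auto; apply HPT. }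
    assert (Pu' : perp X M u) by (apply (perp_subsp X M); [apply (Pu m)|rewrite opp_scal; apply (perp_subsp X M); apply Pu]).
    assert (Pc : perp X M (vsub be u)).
    { replace (vsub be u) with (vsub (vsub (ys m) (snd (PT (s m)))) (vsub (ys n) (snd (PT (s n))))) by (unfold be, u; veq).
      intros m0 Hm. unfold vsub at 1. rewrite hinner_addl, inner_oppl. fold (vsub (ys m) (snd (PT (s m)))).
      fold (vsub (ys n) (snd (PT (s n)))). rewrite Oy, Oy; auto. cring. }
    destruct (op_exists X T HT cT b be Tb) as [fT HfT].
    pose proof (HB' _ _ HfT) as NfT.
    apply op_part_iff in HfT. destruct HfT as [TfT OfT].
    assert (Mw : M (vsub be fT)).
    { apply T0S. apply (sub_eq X T (vsub b b) (vsub be fT)); [apply sub_sub; auto|veq|auto]. }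
    assert (PfT : perp X M fT) by (intros g Hg; apply OfT; apply S0T; auto).
    assert (Uw : u = vsub fT (vsub be u)).
    { assert (W0 : vsub (hadd X u (vsub be u)) fT = hzero X).
      { apply MperpM0.
        - replace (vsub (hadd X u (vsub be u)) fT) with (vsub be fT) by veq. exact Mw.
        - apply (perp_subsp X M). apply (perp_subsp X M); auto. rewrite opp_scal. apply (perp_subsp X M); auto. }
      apply vec_eq_of. replace (hadd X u (hopp X (vsub fT (vsub be u)))) with (vsub (hadd X u (vsub be u)) fT) by veq.
      rewrite W0. apply inner_0l. }
    assert (Eb : b = fst (sub2 (e n) (e m))) by (rewrite !Ee; simpl; unfold b; veq).
    assert (Ec : vsub be u = snd (sub2 (e n) (e m))) by (rewrite !Ee; simpl; unfold be, u; veq).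
    rewrite Uw. unfold vsub at 1.
    eapply Rle_trans; [apply norm_triangle|]. rewrite norm_opp.
    pose proof (norm2_fst X (sub2 (e n) (e m))). pose proof (norm2_snd X (sub2 (e n) (e m))).
    rewrite <- Eb in H. rewrite <- Ec in H0. pose proof (norm_ge0 X b). nra. }
  assert (Cu : cauchy X (fun n => us (phi n))).
  { intros eps He. destruct (Ce (eps / (Cb + 1))) as [N HN]; [apply Rdiv_lt_0_compat; lra|].
    exists N. intros m n Hm Hn. eapply Rle_lt_trans; [apply BND|].
    specialize (HN n m Hn Hm). change (norm2 (sub2 (e (phi n)) (e (phi m))) < eps / (Cb + 1)) in HN.
    apply Rmult_lt_reg_r with (/ (Cb + 1)); [apply Rinv_0_lt_compat; lra|].
    replace ((Cb + 1) * norm2 (sub2 (e (phi n)) (e (phi m))) * / (Cb + 1)) with (norm2 (sub2 (e (phi n)) (e (phi m)))) by (field; lra).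
    exact HN. }
  destruct (cauchy_lim X _ Cu) as [lu Lu]. exists phi, lu. split; auto.
Qed.

End Main.


Theorem theorem3p5 (X : CHilbert) (T S A : Rel X) :
  is_subspace T -> is_subspace S -> is_subspace A ->
  closed_rel T -> hermitian T ->
  closed_rel A -> hermitian A ->
  selfadjoint S ->
  (forall x, dom T x <-> dom S x) ->
  (forall x, dom S x -> dom A x) ->
  (forall x h, T x h <-> rel_sum S A x h) ->
  (exists lam, in_resolvent lam T /\ in_resolvent lam S) ->
  (rel_compact (QAs S A) (op_part S) -> compact_perturbation T S) /\
  (compact_perturbation T S -> bounded_rel (op_part T) ->
     rel_compact (QAs S A) (op_part S)).
Proof.
  intros HT HS HA cT hT cA hA saS domTS domSA sumT _.
  split.
  - apply part1; auto.
  - apply part2; auto.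
Qed.

Print Assumptions theorem3p5.
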